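(* There is an absolute constant $c$ such that the following holds. Let $S$ be a finite set of $n\ge 2$ points in the plane and let $\mathcal{F}$ be the family of axis-parallel rectangles. Then the edges of the Delaunay-graph $D(S,\mathcal{F})$ can be colored with at most $c\log n$ colors (i.e., $O(\log n)$ colors) such that every axis-parallel rectangle that contains at least three points of $S$ contains Delaunay-edges of different colors.
   Context: For a finite point set $S$ and a family of regions $\mathcal{F}$, the Delaunay-edges of $S$ with respect to $\mathcal{F}$ are the $2$-element subsets $\{p,q\}\subseteq S$ for which there is $F\in\mathcal{F}$ with $S\cap F=\{p,q\}$; the Delaunay-graph $D(S,\mathcal{F})$ has vertex set $S$ and the Delaunay-edges as edges. A rectangle contains a Delaunay-edge if it contains both endpoints. Axis-parallel rectangles are sets $[a,b]\times[c,d]$. *)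

(* Defs.v *)
From Stdlib Require Import Reals List.
Open Scope R_scope.

Definition point := (R * R)%type.

Definition in_rect (a b c d : R) (p : point) : Prop :=
  a <= fst p <= b /\ c <= snd p <= d.

Definition delaunay_edge (S : list point) (p q : point) : Prop :=
  p <> q /\ In p S /\ In q S /\
  exists a b c d : R,
    forall x, In x S -> (in_rect a b c d x <-> (x = p \/ x = q)).

(* Main.v *)
Require Import Defs.
From Stdlib Require Import Reals List.
From Stdlib Require Import Lra Lia Arith Classical.
Open Scope R_scope.

Ltac dm x := pose proof (Nat.div_mod_eq x 2); pose proof (Nat.mod_upper_bound x 2 ltac:(lia)).

Fixpoint lv (F a b : nat) : nat :=
  match F with
  | O => O
  | S F' => if Nat.eqb (a/2) (b/2) then O else S (lv F' (a/2) (b/2))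
  end.

Lemma lv_sym F : forall a b, lv F a b = lv F b a.
Proof.
  induction F; intros; simpl; auto.
  rewrite Nat.eqb_sym, IHF. destruct (Nat.eqb (b/2) (a/2)); auto.
Qed.

Lemma lv_le F : forall a b, (lv F a b <= F)%nat.
Proof.
  induction F; intros; cbn [lv]; auto.
  destruct (Nat.eqb (a/2)%nat (b/2)%nat). lia. specialize (IHF (a/2)%nat (b/2)%nat). lia.
Qed.

Lemma lv_distinct F : forall a b c, (a < b)%nat -> (b < c)%nat -> (c < 2^F)%nat ->
  lv F a b <> lv F b c.
Proof.
  induction F; intros a b c H1 H2 H3; cbn [lv] in *.
  - simpl in H3; lia.
  - destruct (Nat.eqb (a/2)%nat (b/2)%nat) eqn:E1; destruct (Nat.eqb (b/2)%nat (c/2)%nat) eqn:E2.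
    + apply Nat.eqb_eq in E1, E2. dm a; dm b; dm c; lia.
    + lia.
    + lia.
    + apply Nat.eqb_neq in E1, E2. intro Heq.
      rewrite Nat.pow_succ_r' in H3.
      apply (IHF (a/2)%nat (b/2)%nat (c/2)%nat); [dm a; dm b; dm c; lia ..| lia].
Qed.

Lemma filter_le {A} (f g : A -> bool) l :
  (forall x, In x l -> f x = true -> g x = true) ->
  (length (filter f l) <= length (filter g l))%nat.
Proof.
  induction l; intros H; simpl; auto.
  assert (IH := IHl (fun x Hx => H x (or_intror Hx))).
  destruct (f a) eqn:Ef.
  - rewrite (H a (or_introl eq_refl) Ef). simpl; lia.
  - destruct (g a); simpl; lia.
Qed.

Lemma filter_lt {A} (f g : A -> bool) l :
  (forall x, In x l -> f x = true -> g x = true) ->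
  (exists x, In x l /\ f x = false /\ g x = true) ->
  (length (filter f l) < length (filter g l))%nat.
Proof.
  induction l; intros H [w [Hw [Hf Hg]]]; simpl in *. contradiction.
  assert (H' : forall x, In x l -> f x = true -> g x = true) by auto.
  assert (Hle := filter_le f g l H').
  destruct Hw as [<-|Hw].
  - rewrite Hf, Hg. simpl; lia.
  - assert (IH := IHl H' (ex_intro _ w (conj Hw (conj Hf Hg)))).
    destruct (f a) eqn:Ef.
    + rewrite (H a (or_introl eq_refl) Ef). simpl; lia.
    + destruct (g a); simpl; lia.
Qed.

Lemma filter_true_len {A} (l : list A) : length (filter (fun _ => true) l) = length l.
Proof. induction l; simpl; auto. Qed.

Definition xr (S : list point) (p : point) : nat :=
  length (filter (fun s => if Rlt_dec (fst s) (fst p) then true else false) S).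
Definition yr (S : list point) (p : point) : nat :=
  length (filter (fun s => if Req_EM_T (fst s) (fst p) then
                             if Rlt_dec (snd s) (snd p) then true else false else false) S).

Lemma xr_lt S p q : In p S -> fst p < fst q -> (xr S p < xr S q)%nat.
Proof.
  intros Hp H. unfold xr. apply filter_lt.
  - intros s _. destruct (Rlt_dec (fst s) (fst p)); try discriminate.
    destruct (Rlt_dec (fst s) (fst q)); auto; lra.
  - exists p. split; auto. destruct (Rlt_dec (fst p) (fst p)); try lra.
    destruct (Rlt_dec (fst p) (fst q)); auto; lra.
Qed.

Lemma yr_lt S p q : In p S -> fst p = fst q -> snd p < snd q -> (yr S p < yr S q)%nat.
Proof.
  intros Hp H1 H. unfold yr. apply filter_lt.
  - intros s _. destruct (Req_EM_T (fst s) (fst p)); try discriminate.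
    destruct (Rlt_dec (snd s) (snd p)); try discriminate.
    destruct (Req_EM_T (fst s) (fst q)); [|lra].
    destruct (Rlt_dec (snd s) (snd q)); auto; lra.
  - exists p. split; auto. destruct (Req_EM_T (fst p) (fst p)); [|lra].
    destruct (Rlt_dec (snd p) (snd p)); try lra. split; auto.
    destruct (Req_EM_T (fst p) (fst q)); [|lra].
    destruct (Rlt_dec (snd p) (snd q)); auto; lra.
Qed.

Lemma xr_bound S p : In p S -> (xr S p < length S)%nat.
Proof.
  intros Hp. unfold xr. rewrite <- (filter_true_len S). apply filter_lt; auto.
  exists p. split; auto. destruct (Rlt_dec (fst p) (fst p)); auto; lra.
Qed.

Lemma yr_bound S p : In p S -> (yr S p < length S)%nat.
Proof.
  intros Hp. unfold yr. rewrite <- (filter_true_len S). apply filter_lt; auto.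
  exists p. split; auto. destruct (Req_EM_T (fst p) (fst p)); auto.
  destruct (Rlt_dec (snd p) (snd p)); auto; lra.
Qed.

Definition bbox (p q r : point) : Prop :=
  in_rect (Rmin (fst p) (fst q)) (Rmax (fst p) (fst q))
          (Rmin (snd p) (snd q)) (Rmax (snd p) (snd q)) r.

Definition sz (p q : point) : R := Rabs (fst p - fst q) + Rabs (snd p - snd q).

Lemma mm_in a b r lo hi : lo <= a <= hi -> lo <= b <= hi -> Rmin a b <= r <= Rmax a b ->
  lo <= r <= hi.
Proof. unfold Rmin, Rmax; destruct (Rle_dec a b); lra. Qed.

Lemma mm_self_l a b : Rmin a b <= a <= Rmax a b.
Proof. unfold Rmin, Rmax; destruct (Rle_dec a b); lra. Qed.
Lemma mm_self_r a b : Rmin a b <= b <= Rmax a b.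
Proof. unfold Rmin, Rmax; destruct (Rle_dec a b); lra. Qed.

Lemma h1 a b r : Rmin a b <= r <= Rmax a b ->
  Rabs (r - b) <= Rabs (a - b) /\ (r <> a -> Rabs (r - b) < Rabs (a - b)).
Proof.
  unfold Rmin, Rmax; destruct (Rle_dec a b); intros H; split; try intros Hn;
  unfold Rabs; repeat destruct Rcase_abs;
  try (destruct (Rtotal_order r a) as [?|[?|?]]; [|contradiction|]); lra.
Qed.

Lemma h2 a b r : Rmin a b <= r <= Rmax a b ->
  Rabs (a - r) <= Rabs (a - b) /\ (r <> b -> Rabs (a - r) < Rabs (a - b)).
Proof.
  unfold Rmin, Rmax; destruct (Rle_dec a b); intros H; split; try intros Hn;
  unfold Rabs; repeat destruct Rcase_abs;
  try (destruct (Rtotal_order r b) as [?|[?|?]]; [|contradiction|]); lra.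
Qed.

Lemma pt_neq (p r : point) : r <> p -> fst r <> fst p \/ snd r <> snd p.
Proof.
  destruct p as [p1 p2], r as [r1 r2]; simpl; intros H.
  destruct (classic (r1 = p1)); destruct (classic (r2 = p2)); subst; auto.
Qed.

Lemma sz_lt_l p q r : bbox p q r -> r <> p -> sz r q < sz p q.
Proof.
  intros [Hx Hy] Hn. unfold sz.
  destruct (h1 _ _ _ Hx) as [A1 A2]. destruct (h1 _ _ _ Hy) as [B1 B2].
  destruct (pt_neq _ _ Hn) as [H|H]; [apply A2 in H | apply B2 in H]; lra.
Qed.

Lemma sz_lt_r p q r : bbox p q r -> r <> q -> sz p r < sz p q.
Proof.
  intros [Hx Hy] Hn. unfold sz.
  destruct (h2 _ _ _ Hx) as [A1 A2]. destruct (h2 _ _ _ Hy) as [B1 B2].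
  destruct (pt_neq _ _ Hn) as [H|H]; [apply A2 in H | apply B2 in H]; lra.
Qed.

Lemma bbox_delaunay S p q : p <> q -> In p S -> In q S ->
  (forall r, In r S -> bbox p q r -> r = p \/ r = q) -> delaunay_edge S p q.
Proof.
  intros Hne Hp Hq H. repeat split; auto.
  exists (Rmin (fst p) (fst q)), (Rmax (fst p) (fst q)),
         (Rmin (snd p) (snd q)), (Rmax (snd p) (snd q)).
  intros x Hx. split.
  - intros Hr. apply H; auto.
  - intros [->| ->]; split; auto using mm_self_l, mm_self_r.
Qed.

Lemma list_min {A} (l : list A) (P : A -> Prop) (g : A -> R) :
  (exists a, In a l /\ P a) ->
  exists m, In m l /\ P m /\ forall a, In a l -> P a -> g m <= g a.
Proof.
  induction l as [|x l IH]; intros [w [Hw Pw]]; simpl in *. contradiction.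
  destruct (classic (exists a, In a l /\ P a)) as [He|Hne].
  - destruct (IH He) as [m [Hm [Pm Hmin]]].
    destruct (classic (P x)) as [Px|nPx].
    + destruct (Rle_dec (g x) (g m)).
      * exists x. repeat split; auto. intros a [<-|Ha] Pa. lra. specialize (Hmin a Ha Pa); lra.
      * exists m. repeat split; auto. intros a [<-|Ha] Pa. lra. auto.
    + exists m. repeat split; auto. intros a [<-|Ha] Pa. contradiction. auto.
  - destruct Hw as [<-|Hw]; [|exfalso; apply Hne; eauto].
    exists x. repeat split; auto. intros a [<-|Ha] Pa. lra. exfalso; apply Hne; eauto.
Qed.

Lemma min_pair_delaunay S a b c0 d (Pr : point -> point -> Prop) :
  (forall p q, Pr p q -> p <> q) ->
  (forall p q r, In p S -> in_rect a b c0 d p -> In q S -> in_rect a b c0 d q ->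
     In r S -> in_rect a b c0 d r -> Pr p q -> bbox p q r -> r <> p -> r <> q ->
     Pr r q \/ Pr p r) ->
  (exists p q, In p S /\ in_rect a b c0 d p /\ In q S /\ in_rect a b c0 d q /\ Pr p q) ->
  exists p q, In p S /\ in_rect a b c0 d p /\ In q S /\ in_rect a b c0 d q /\ Pr p q /\
     delaunay_edge S p q.
Proof.
  intros Hne Hcl [p0 [q0 [Hp0 [Rp0 [Hq0 [Rq0 P0]]]]]].
  destruct (list_min (list_prod S S)
     (fun pq => in_rect a b c0 d (fst pq) /\ in_rect a b c0 d (snd pq) /\ Pr (fst pq) (snd pq))
     (fun pq => sz (fst pq) (snd pq))) as [[p q] [Hin [[Rp [Rq Ppq]] Hmin]]].
  { exists (p0, q0). split. apply in_prod; auto. simpl; auto. }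
  apply in_prod_iff in Hin as [Hp Hq]. simpl in *.
  exists p, q. do 5 (split; [auto|]).
  apply bbox_delaunay; auto.
  intros r Hr Hb.
  destruct (classic (r = p)); auto. destruct (classic (r = q)); auto. exfalso.
  assert (Rr : in_rect a b c0 d r).
  { destruct Rp as [A1 A2], Rq as [B1 B2], Hb as [C1 C2]. split.
    exact (mm_in _ _ _ _ _ A1 B1 C1). exact (mm_in _ _ _ _ _ A2 B2 C2). }
  destruct (Hcl p q r Hp Rp Hq Rq Hr Rr Ppq Hb H H0) as [Hc|Hc].
  - assert (Hm := Hmin (r, q) ltac:(apply in_prod; auto) ltac:(simpl; auto)).
    simpl in Hm. assert (Hs := sz_lt_l p q r Hb H). lra.
  - assert (Hm := Hmin (p, r) ltac:(apply in_prod; auto) ltac:(simpl; auto)).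
    simpl in Hm. assert (Hs := sz_lt_r p q r Hb H0). lra.
Qed.

Lemma middle (P : point -> Prop) (f : point -> R) x y z :
  P x -> P y -> P z -> f x <> f y -> f x <> f z -> f y <> f z ->
  exists l m h, P l /\ P m /\ P h /\ f l < f m /\ f m < f h.
Proof.
  intros Px Py Pz H1 H2 H3.
  destruct (Rtotal_order (f x) (f y)) as [a|[a|a]]; [|contradiction|];
  destruct (Rtotal_order (f x) (f z)) as [b|[b|b]]; try contradiction;
  destruct (Rtotal_order (f y) (f z)) as [c|[c|c]]; try contradiction;
  first [ exists x, y, z; repeat split; auto; lra
        | exists x, z, y; repeat split; auto; lra
        | exists y, x, z; repeat split; auto; lra
        | exists y, z, x; repeat split; auto; lra
        | exists z, x, y; repeat split; auto; lra
        | exists z, y, x; repeat split; auto; lra ].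
Qed.

Lemma bbox_x p q r : bbox p q r -> Rmin (fst p) (fst q) <= fst r <= Rmax (fst p) (fst q).
Proof. intros [H _]; auto. Qed.
Lemma bbox_y p q r : bbox p q r -> Rmin (snd p) (snd q) <= snd r <= Rmax (snd p) (snd q).
Proof. intros [_ H]; auto. Qed.

Lemma ln_mono x y : 0 < x -> x <= y -> ln x <= ln y.
Proof.
  intros H1 H2. destruct (Rle_lt_or_eq_dec x y H2) as [H|H].
  - left. apply ln_increasing; auto.
  - subst; lra.
Qed.

Lemma log_bound (n : nat) : (2 <= n)%nat ->
  INR (2 * S (Nat.log2 n) + 2) <= 6 / ln 2 * ln (INR n).
Proof.
  intros Hn.
  assert (Hl2 : 0 < ln 2) by (pose proof ln_lt_2; lra).
  assert (Hn2 : 2 <= INR n) by (apply (le_INR 2); auto).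
  assert (Hm : INR (Nat.log2 n) * ln 2 <= ln (INR n)).
  { destruct (Nat.log2_spec n ltac:(lia)) as [A _].
    apply le_INR in A. rewrite pow_INR in A. simpl (INR 2) in A.
    rewrite <- ln_pow by lra. apply ln_mono. apply pow_lt; lra. simpl in A. replace 2 with (1+1) by lra. exact A. }
  assert (H2 : ln 2 <= ln (INR n)) by (apply ln_mono; lra).
  replace (INR (2 * S (Nat.log2 n) + 2)) with (2 * INR (Nat.log2 n) + 4).
  2:{ rewrite plus_INR, mult_INR, !S_INR. simpl. ring. }
  apply Rmult_le_reg_r with (ln 2); auto.
  replace (6 / ln 2 * ln (INR n) * ln 2) with (6 * ln (INR n)) by (field; lra).
  lra.
Qed.

Theorem corollary2 :
  exists c : R,
  forall S : list point,
    NoDup S -> (2 <= length S)%nat ->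
    exists (k : nat) (col : point -> point -> nat),
      INR k <= c * ln (INR (length S)) /\
      (forall p q, delaunay_edge S p q -> col p q = col q p /\ (col p q < k)%nat) /\
      (forall a b c0 d : R,
         (exists x y z, In x S /\ In y S /\ In z S /\
            x <> y /\ x <> z /\ y <> z /\
            in_rect a b c0 d x /\ in_rect a b c0 d y /\ in_rect a b c0 d z) ->
         exists p q p' q',
           delaunay_edge S p q /\ delaunay_edge S p' q' /\
           in_rect a b c0 d p /\ in_rect a b c0 d q /\
           in_rect a b c0 d p' /\ in_rect a b c0 d q' /\
           col p q <> col p' q').
Proof.
  exists (6 / ln 2). intros S HND Hlen.
  set (F := Nat.succ (Nat.log2 (length S))).
  assert (HF : (length S < 2 ^ F)%nat) by (apply (Nat.log2_spec (length S)); lia).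
  set (col := fun p q : point => if Req_EM_T (fst p) (fst q)
                then (2 * lv F (yr S p) (yr S q) + 1)%nat
                else (2 * lv F (xr S p) (xr S q))%nat).
  exists (2 * F + 2)%nat, col. split; [|split].
  - apply log_bound; auto.
  - intros p q _. unfold col. split.
    + destruct (Req_EM_T (fst p) (fst q)); destruct (Req_EM_T (fst q) (fst p));
        try lra; rewrite lv_sym; auto.
    + destruct (Req_EM_T (fst p) (fst q)).
      * pose proof (lv_le F (yr S p) (yr S q)). lia.
      * pose proof (lv_le F (xr S p) (xr S q)). lia.
  - intros a b c0 d [x [y [z [Hx [Hy [Hz [Hxy [Hxz [Hyz [Rx [Ry Rz]]]]]]]]]]].
    destruct (classic (exists u v, In u S /\ in_rect a b c0 d u /\ In v S /\ in_rect a b c0 d v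
                          /\ u <> v /\ fst u = fst v)) as [Hc|Hc].
    + destruct Hc as [u [v [Hu [Ru [Hv [Rv [Huv Hfuv]]]]]]].
      destruct (classic (exists w, In w S /\ in_rect a b c0 d w /\ fst w <> fst u)) as [Hw|Hw].
      * destruct Hw as [w [Hw [Rw Hfw]]].
        destruct (min_pair_delaunay S a b c0 d (fun p q => fst p = fst q /\ p <> q))
          as [p1 [q1 [_ [Rp1 [_ [Rq1 [[E1 _] D1]]]]]]].
        { intros p q [_ H]; auto. }
        { intros p q r _ _ _ _ _ _ [E N] Hb Nrp Nrq. left. split; auto.
          apply bbox_x in Hb. rewrite E in Hb. rewrite Rmin_left, Rmax_left in Hb by lra. lra. }
        { exists u, v; tauto. }
        destruct (min_pair_delaunay S a b c0 d (fun p q => fst p <> fst q))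
          as [p2 [q2 [_ [Rp2 [_ [Rq2 [E2 D2]]]]]]].
        { intros p q H E; subst; auto. }
        { intros p q r _ _ _ _ _ _ N Hb Nrp Nrq.
          destruct (Req_EM_T (fst r) (fst q)); [right|left]; auto. congruence. }
        { exists w, u; tauto. }
        exists p1, q1, p2, q2. do 6 (split; [assumption|]).
        unfold col. destruct (Req_EM_T (fst p1) (fst q1)); try contradiction.
        destruct (Req_EM_T (fst p2) (fst q2)); try contradiction. lia.
      *
        assert (Hall : forall w, In w S -> in_rect a b c0 d w -> fst w = fst u).
        { intros w H1 H2. apply NNPP. intro. apply Hw. eauto. }
        assert (Hsy : forall p q, In p S -> in_rect a b c0 d p -> In q S -> in_rect a b c0 d q ->
                   p <> q -> snd p <> snd q).
        { intros p q H1 H2 H3 H4 N E. apply N.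
          pose proof (Hall _ H1 H2) as X1. pose proof (Hall _ H3 H4) as X2.
          destruct p, q; simpl in *. f_equal; congruence. }
        destruct (middle (fun p => In p S /\ in_rect a b c0 d p) snd x y z)
          as [l [m [h [[Hl Rl] [[Hm Rm] [[Hh Rh] [L1 L2]]]]]]]; auto.
        destruct (min_pair_delaunay S a b c0 d (fun p q => q = m /\ snd p < snd m))
          as [p1 [q1 [Hp1 [Rp1 [_ [Rq1 [[E1 L3] D1]]]]]]].
        { intros p q [-> H] E; subst; lra. }
        { intros p q r _ _ _ _ Hr Rr [-> N] Hb Nrp Nrq. left. split; auto.
          apply bbox_y in Hb. unfold Rmin, Rmax in Hb. destruct (Rle_dec (snd p) (snd m)); try lra.
          assert (snd r <> snd m) by (apply Hsy; auto). lra. }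
        { exists l, m; tauto. }
        destruct (min_pair_delaunay S a b c0 d (fun p q => p = m /\ snd m < snd q))
          as [p2 [q2 [_ [Rp2 [Hq2 [Rq2 [[E2 L4] D2]]]]]]].
        { intros p q [-> H] E; subst; lra. }
        { intros p q r _ _ _ _ Hr Rr [-> N] Hb Nrp Nrq. right. split; auto.
          apply bbox_y in Hb. unfold Rmin, Rmax in Hb. destruct (Rle_dec (snd m) (snd q)); try lra.
          assert (snd r <> snd m) by (apply Hsy; auto). lra. }
        { exists m, h; tauto. }
        subst q1 p2.
        exists p1, m, m, q2. do 6 (split; [assumption|]).
        assert (Ep : fst p1 = fst m) by (rewrite (Hall p1), (Hall m); auto).
        assert (Eq : fst m = fst q2) by (rewrite (Hall q2), (Hall m); auto).
        unfold col. destruct (Req_EM_T (fst p1) (fst m)); try contradiction.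
        destruct (Req_EM_T (fst m) (fst q2)); try contradiction.
        assert (A1 := yr_lt S p1 m Hp1 Ep L3).
        assert (A2 := yr_lt S m q2 Hm Eq L4).
        assert (A3 := yr_bound S q2 Hq2).
        assert (lv F (yr S p1) (yr S m) <> lv F (yr S m) (yr S q2)).
        { apply lv_distinct; lia. }
        lia.
    + assert (Hsx : forall p q, In p S -> in_rect a b c0 d p -> In q S -> in_rect a b c0 d q ->
                   p <> q -> fst p <> fst q).
      { intros p q H1 H2 H3 H4 N E. apply Hc. exists p, q; tauto. }
      destruct (middle (fun p => In p S /\ in_rect a b c0 d p) fst x y z)
        as [l [m [h [[Hl Rl] [[Hm Rm] [[Hh Rh] [L1 L2]]]]]]]; auto.
      destruct (min_pair_delaunay S a b c0 d (fun p q => q = m /\ fst p < fst m))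
        as [p1 [q1 [Hp1 [Rp1 [_ [Rq1 [[E1 L3] D1]]]]]]].
      { intros p q [-> H] E; subst; lra. }
      { intros p q r _ _ _ _ Hr Rr [-> N] Hb Nrp Nrq. left. split; auto.
        apply bbox_x in Hb. unfold Rmin, Rmax in Hb. destruct (Rle_dec (fst p) (fst m)); try lra.
        assert (fst r <> fst m) by (apply Hsx; auto). lra. }
      { exists l, m; tauto. }
      destruct (min_pair_delaunay S a b c0 d (fun p q => p = m /\ fst m < fst q))
        as [p2 [q2 [_ [Rp2 [Hq2 [Rq2 [[E2 L4] D2]]]]]]].
      { intros p q [-> H] E; subst; lra. }
      { intros p q r _ _ _ _ Hr Rr [-> N] Hb Nrp Nrq. right. split; auto.
        apply bbox_x in Hb. unfold Rmin, Rmax in Hb. destruct (Rle_dec (fst m) (fst q)); try lra.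
        assert (fst r <> fst m) by (apply Hsx; auto). lra. }
      { exists m, h; tauto. }
      subst q1 p2.
      exists p1, m, m, q2. do 6 (split; [assumption|]).
      unfold col. destruct (Req_EM_T (fst p1) (fst m)); try lra.
      destruct (Req_EM_T (fst m) (fst q2)); try lra.
      assert (A1 := xr_lt S p1 m Hp1 L3).
      assert (A2 := xr_lt S m q2 Hm L4).
      assert (A3 := xr_bound S q2 Hq2).
      assert (lv F (xr S p1) (xr S m) <> lv F (xr S m) (xr S q2)).
      { apply lv_distinct; lia. }
      lia.
Qed.
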